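(* If $M=\mathbb R^n$ with the Euclidean metric, then $\dim_{P(\mathit{unc})}(E)=\dim_P(E)$ for every $E\subset\mathbb R^n$.
   Context: $|A|$ denotes diameter. An $\varepsilon$-packing of $E$ is a finite or countable family of pairwise disjoint open balls of diameter $\le\varepsilon$ with centers in $E$; an uncentered $\varepsilon$-packing is the same but with the center condition replaced by ''each ball meets $E$''. For $\alpha\ge0$: $\mathcal P^\alpha_\varepsilon(E)=\sup\sum_i|E_i|^\alpha$ over $\varepsilon$-packings, $\mathcal P^\alpha_0(E)=\lim_{\varepsilon\to0}\mathcal P^\alpha_\varepsilon(E)$, $\mathcal P^\alpha(E)=\inf\{\sum_j\mathcal P^\alpha_0(E_j):E\subset\bigcup_jE_j\}$ over countable covers, $\dim_P(E)=\inf\{\alpha:\mathcal P^\alpha(E)=0\}$; $\dim_{P(\mathit{unc})}$ is defined identically with uncentered packings. *)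

(* Defs.v *)
From HB Require Import structures.
From mathcomp Require Import all_boot all_order all_algebra.
From mathcomp Require Import all_classical all_reals all_analysis.
Set Implicit Arguments.
Unset Strict Implicit.
Unset Printing Implicit Defensive.
Import Order.TTheory GRing.Theory Num.Theory.
Local Open Scope classical_set_scope.
Local Open Scope ring_scope.

Section PackingDim.
Variables (R : realType) (n : nat).
Local Notation pt := 'rV[R]_n.

Definition edist (x y : pt) : R := Num.sqrt (\sum_(i < n) (x 0 i - y 0 i) ^+ 2).

Definition eball (c : pt) (r : R) : set pt := [set y | edist c y < r].

(* diameter |A| (used for balls, which are nonempty and bounded) *)
Definition diam (A : set pt) : R := sup [set edist p.1 p.2 | p in A `*` A].

(* A packing: a finite or countable family, indexed by I ⊆ nat, of pairwise
   disjoint open balls B(c i, r i) (r i > 0) of diameter <= eps.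
   [centered = true]: centers in E; [centered = false]: each ball meets E. *)
Definition is_packing (centered : bool) (eps : R) (E : set pt)
    (I : set nat) (c : nat -> pt) (r : nat -> R) : Prop :=
  (forall i, I i -> 0 < r i) /\
  (forall i, I i -> diam (eball (c i) (r i)) <= eps) /\
  (forall i j, I i -> I j -> i <> j -> eball (c i) (r i) `&` eball (c j) (r j) = set0) /\
  (forall i, I i -> if centered then E (c i) else eball (c i) (r i) `&` E !=set0).

Local Open Scope ereal_scope.

Definition Peps (centered : bool) (alpha eps : R) (E : set pt) : \bar R :=
  ereal_sup [set s | exists I c r, is_packing centered eps E I c r /\
      s = \esum_(i in I) ((diam (eball (c i) (r i))) `^ alpha)%:E].

Definition P0 (centered : bool) (alpha : R) (E : set pt) : \bar R :=
  lim (Peps centered alpha eps E @[eps --> 0^'+]).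

Definition Pmeas (centered : bool) (alpha : R) (E : set pt) : \bar R :=
  ereal_inf [set s | exists F : nat -> set pt, E `<=` \bigcup_j F j /\
      s = \sum_(0 <= j <oo) P0 centered alpha (F j)].

Definition dimP_gen (centered : bool) (E : set pt) : \bar R :=
  ereal_inf [set a%:E | a in [set a : R | (0 <= a)%R /\ Pmeas centered a E = 0]].

Definition dimP (E : set pt) := dimP_gen true E.
Definition dimP_unc (E : set pt) := dimP_gen false E.

End PackingDim.

(* Main.v *)
From HB Require Import structures.
From mathcomp Require Import all_boot all_order all_algebra.
From mathcomp Require Import all_classical all_reals all_analysis.
From mathcomp Require Import ring lra zify.
Require Import Defs.
Set Implicit Arguments.
Unset Strict Implicit.
Unset Printing Implicit Defensive.
Import Order.TTheory GRing.Theory Num.Theory.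
Local Open Scope classical_set_scope.
Local Open Scope ring_scope.

Section Geo.
Variables (R : realType) (n : nat).
Local Notation pt := 'rV[R]_n.

Lemma CS (a b : 'I_n -> R) :
  \sum_i a i * b i <= Num.sqrt (\sum_i a i ^+ 2) * Num.sqrt (\sum_i b i ^+ 2).
Proof.
set SA := \sum_i a i ^+ 2; set SB := \sum_i b i ^+ 2.
have SA0 : 0 <= SA by apply: sumr_ge0 => i _; exact: sqr_ge0.
have SB0 : 0 <= SB by apply: sumr_ge0 => i _; exact: sqr_ge0.
have [A0|] := eqVneq SA 0.
  have ai : forall i, a i = 0.
    move=> i; apply/eqP; rewrite -sqrf_eq0; apply/eqP.
    exact: (psumr_eq0P (fun j _ => sqr_ge0 (a j)) A0).
  rewrite big1 ?mulr_ge0 ?sqrtr_ge0 // => i _; by rewrite ai mul0r.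
have [B0|] := eqVneq SB 0.
  have bi : forall i, b i = 0.
    move=> i; apply/eqP; rewrite -sqrf_eq0; apply/eqP.
    exact: (psumr_eq0P (fun j _ => sqr_ge0 (b j)) B0).
  rewrite big1 ?mulr_ge0 ?sqrtr_ge0 // => i _; by rewrite bi mulr0.
move=> SBn0 SAn0.
set A := Num.sqrt SA; set B := Num.sqrt SB.
have Ap : 0 < A by rewrite sqrtr_gt0 lt_neqAle eq_sym SAn0.
have Bp : 0 < B by rewrite sqrtr_gt0 lt_neqAle eq_sym SBn0.
have AA : A ^+ 2 = SA by rewrite sqr_sqrtr.
have BB : B ^+ 2 = SB by rewrite sqr_sqrtr.
have key : forall i, a i * b i <= (B / A) * a i ^+ 2 / 2 + (A / B) * b i ^+ 2 / 2.
  move=> i.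
  have h : 0 <= (B * a i - A * b i) ^+ 2 / (2 * A * B).
    by apply: divr_ge0; [exact: sqr_ge0| rewrite !mulr_ge0 // ltW].
  have e : (B / A) * a i ^+ 2 / 2 + (A / B) * b i ^+ 2 / 2 - a i * b i
           = (B * a i - A * b i) ^+ 2 / (2 * A * B).
    field; by rewrite ?gt_eqF.
  by rewrite -subr_ge0 e.
apply: (le_trans (ler_sum _ (fun i _ => key i))).
rewrite big_split /= -!mulr_suml -!mulr_sumr -/SA -/SB -AA -BB.
have -> : B / A * A ^+ 2 / 2 + A / B * B ^+ 2 / 2 = A * B.
  field; by rewrite ?gt_eqF.
by [].
Qed.

Lemma edist_triangle (x y z : pt) : edist x z <= edist x y + edist y z.
Proof.
rewrite /edist.
set a := fun i => x 0 i - y 0 i; set b := fun i => y 0 i - z 0 i.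
have -> : \sum_i (x 0 i - z 0 i) ^+ 2 = \sum_i (a i + b i) ^+ 2.
  by apply: eq_bigr => i _; rewrite /a /b; congr (_ ^+ 2); ring.
rewrite -(ler_pXn2r (n:=2)) // ?nnegrE ?addr_ge0 ?sqrtr_ge0 //.
rewrite sqr_sqrtr; last by apply: sumr_ge0 => i _; exact: sqr_ge0.
have -> : \sum_i (a i + b i) ^+ 2 = \sum_i a i ^+ 2 + 2 * \sum_i a i * b i + \sum_i b i ^+ 2.
  rewrite mulr_sumr -!big_split /=; apply: eq_bigr => i _; ring.
rewrite sqrrD !sqr_sqrtr; try (by apply: sumr_ge0 => i _; exact: sqr_ge0).
rewrite lerD2r lerD2l mulr2n.
have := CS a b; rewrite /a /b; lra.
Qed.

Lemma edist_sym (x y : pt) : edist x y = edist y x.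
Proof. rewrite /edist; congr Num.sqrt; apply: eq_bigr => i _; ring. Qed.

Lemma edist_ge0 (x y : pt) : 0 <= edist x y.
Proof. exact: sqrtr_ge0. Qed.

Lemma edist_xx (x : pt) : edist x x = 0.
Proof. by rewrite /edist big1 ?sqrtr0 // => i _; rewrite subrr expr0n. Qed.

Lemma edist_coord (x y : pt) i : `|x 0 i - y 0 i| <= edist x y.
Proof.
rewrite /edist -sqrtr_sqr ler_sqrt; last by apply: sumr_ge0 => j _; exact: sqr_ge0.
by rewrite (bigD1 i) //= lerDl; apply: sumr_ge0 => j _; exact: sqr_ge0.
Qed.


Lemma edist_add (x u : pt) : edist x (x + u) = Num.sqrt (\sum_i (u 0 i) ^+ 2).
Proof.
rewrite /edist; congr Num.sqrt; apply: eq_bigr => i _; rewrite mxE; ring.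
Qed.

Lemma edist_ballE (c y : pt) r : eball c r y = (edist c y < r).
Proof. by []. Qed.

Lemma diam_set_ub (c : pt) r : 0 < r ->
  ubound [set edist p.1 p.2 | p in eball c r `*` eball c r] (2 * r).
Proof.
move=> r0 _ [[p q] [/= pb qb] <-] /=.
move: pb qb; rewrite /eball /= => pb qb.
have := edist_triangle p c q; rewrite (edist_sym p c); lra.
Qed.

Lemma diam_set_ne (c : pt) r : 0 < r ->
  [set edist p.1 p.2 | p in eball c r `*` eball c r] (0 : R).
Proof.
move=> r0; exists (c, c) => /=; last exact: edist_xx.
by split; rewrite /eball /= edist_xx.
Qed.

Lemma diam_le (c : pt) r : 0 < r -> diam (eball c r) <= 2 * r.
Proof.
move=> r0; apply: ge_sup; first by eexists; exact: diam_set_ne.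
exact: diam_set_ub.
Qed.

Lemma diam_ge0 (c : pt) r : 0 < r -> 0 <= diam (eball c r).
Proof.
move=> r0; apply: sup_upper_bound; last exact: diam_set_ne.
split; first by eexists; exact: diam_set_ne.
by exists (2 * r); exact: diam_set_ub.
Qed.

Lemma diam_n0 (c : pt) r : n = 0%N -> 0 < r -> diam (eball c r) = 0.
Proof.
move=> n0 r0; apply/eqP; rewrite eq_le; apply/andP; split; last exact: diam_ge0.
apply: ge_sup; first by eexists; exact: diam_set_ne.
move=> _ [p _ <-]; rewrite /edist.
move: (p.1) (p.2); rewrite n0 => a b.
by rewrite big_ord0 sqrtr0.
Qed.

Lemma diam_eq (c : pt) r : (0 < n)%N -> 0 < r -> diam (eball c r) = 2 * r.
Proof.
move=> n0 r0; apply/eqP; rewrite eq_le; apply/andP; split; first exact: diam_le.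
set d := diam _.
have d0 : 0 <= d by exact: diam_ge0.
rewrite leNgt; apply/negP => dlt.
set t := (d / 2 + r) / 2.
have t0 : 0 < t by rewrite /t; apply: divr_gt0 => //; apply: ltr_wpDl => //; exact: divr_ge0.
have tr : t < r by rewrite /t; lra.
have dt : d < 2 * t by rewrite /t; lra.
pose i0 : 'I_n := Ordinal n0.
pose u : pt := t *: delta_mx 0 i0.
have su : \sum_i (u 0 i) ^+ 2 = t ^+ 2.
  rewrite (bigD1 i0) //= big1 ?addr0; last first.
    by move=> j /negbTE ji; rewrite /u !mxE ji andbF mulr0 expr0n.
  by rewrite /u !mxE !eqxx mulr1.
have hd : edist (c + u) (c - u) = 2 * t.
  have -> : c - u = (c + u) + (- (2 : R)) *: u.
    by apply/rowP => i; rewrite !mxE; ring.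
  rewrite edist_add.
  have -> : \sum_i (((- (2:R)) *: u) 0 i) ^+ 2 = 4 * t ^+ 2.
    rewrite -su mulr_sumr; apply: eq_bigr => i _; rewrite mxE; ring.
  rewrite sqrtrM ?ler0n // sqrtr_sqr gtr0_norm //.
  have -> : (4 : R) = 2 ^+ 2 by rewrite expr2 -natrM.
  by rewrite sqrtr_sqr gtr0_norm.
have hu : forall v : pt, \sum_i (v 0 i) ^+ 2 = t ^+ 2 -> eball c r (c + v).
  move=> v sv; rewrite /eball /= edist_add sv sqrtr_sqr gtr0_norm //.
have uin : eball c r (c + u) by exact: hu.
have uin' : eball c r (c - u).
  rewrite -[c - u]/(c + - u); apply: hu; rewrite -su; apply: eq_bigr => i _; rewrite mxE; ring.
have : 2 * t <= d.
  apply: sup_upper_bound.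
    split; first by eexists; exact: diam_set_ne.
    by exists (2 * r); exact: diam_set_ub.
  by exists (c + u, c - u) => //.
lra.
Qed.

End Geo.

Section Lat.
Variables (R : realType) (n : nat).
Local Notation pt := 'rV[R]_n.

Lemma floor_diff (a b : R) (m : nat) : `|a - b| < m%:R ->
  (- (m%:Z) <= Num.floor a - Num.floor b) && (Num.floor a - Num.floor b <= m%:Z).
Proof.
move=> h.
have /andP[a1 a2] := floor_itv a.
have /andP[b1 b2] := floor_itv b.
move: h; rewrite ltr_norml => /andP[h1 h2].
have u : (Num.floor a - Num.floor b < m%:Z + 1).
  rewrite -(ltr_int R) rmorphB rmorphD /=.
  rewrite rmorphD /= in a2 b2; lra.
have l : (- (m%:Z) - 1 < Num.floor a - Num.floor b).
  rewrite -(ltr_int R) !rmorphB /= rmorphN /=.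
  rewrite rmorphD /= in a2 b2; lra.
apply/andP; split; lia.
Qed.


Lemma lattice_count (u : seq nat) (c : nat -> pt) (s : R) (y : pt) :
  (0 < n)%N -> 0 < s -> uniq u ->
  (forall i j, i \in u -> j \in u -> i <> j -> eball (c i) s `&` eball (c j) s = set0) ->
  (forall i, i \in u -> edist (c i) y < 6 * s) ->
  (size u <= ((12 * n).+1) ^ n)%N.
Proof.
move=> n0 s0 uu disj near.
have nR : (0 : R) < n%:R by rewrite ltr0n.
set h := s / n%:R.
have h0 : 0 < h by exact: divr_gt0.
pose D i l := Num.floor (c i 0 l / h) - Num.floor (y 0 l / h).
have Db : forall i l, i \in u -> (- ((6 * n)%N%:Z) <= D i l) && (D i l <= (6 * n)%N%:Z).
  move=> i l iu; apply: floor_diff.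
  rewrite -mulrBl normrM (gtr0_norm (x:=h^-1)) ?invr_gt0 //.
  rewrite ltr_pdivrMr //.
  apply: (le_lt_trans (edist_coord _ _ _)); rewrite /h natrM.
  have -> : (6%:R * n%:R * (s / n%:R)) = 6 * s.
    field; by rewrite gt_eqF.
  exact: near i iu.
pose k i l := absz (D i l + (6 * n)%N%:Z).
have kE : forall i l, i \in u -> (k i l)%:Z = D i l + (6 * n)%N%:Z.
  move=> i l iu; rewrite /k gez0_abs //; have := Db i l iu; lia.
have kb : forall i l, i \in u -> (k i l < (12 * n).+1)%N.
  move=> i l iu; have := Db i l iu; have := kE i l iu; lia.
pose f i : {ffun 'I_n -> 'I_((12 * n).+1)} := [ffun l => inord (k i l)].
have finj : {in u &, injective f}.
  move=> i j iu ju fij; apply: contrapT => ij.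
  have eqk : forall l, Num.floor (c i 0 l / h) = Num.floor (c j 0 l / h).
    move=> l; have := congr1 (fun g : {ffun 'I_n -> 'I_((12*n).+1)} => nat_of_ord (g l)) fij; rewrite /f !ffunE /=.
    rewrite !inordK ?kb // => e.
    have := kE i l iu; have := kE j l ju; rewrite e /D; lia.
  pose g : pt := \row_l (h * ((Num.floor (c i 0 l / h))%:~R + 2^-1)).
  have gin : forall m, (forall l, Num.floor (c m 0 l / h) = Num.floor (c i 0 l / h)) ->
      eball (c m) s g.
    move=> m hm; rewrite /eball /= /edist.
    have sb : \sum_l (c m 0 l - g 0 l) ^+ 2 <= n%:R * (h / 2) ^+ 2.
      rewrite -[n in X in _ <= X * _]card_ord -sum1_card natr_sum mulr_suml.
      apply: ler_sum => l _; rewrite mul1r /g mxE -(hm l).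
      have /andP[f1 f2] := floor_itv (c m 0 l / h).
      rewrite rmorphD /= in f2.
      set F := ((Num.floor (c m 0 l / h))%:~R : R) in f1 f2 *.
      have e1 : c m 0 l = h * (c m 0 l / h) by field; rewrite gt_eqF.
      set t := c m 0 l / h in f1 f2 e1.
      rewrite e1.
      have q1 : - (h / 2) <= h * t - h * (F + 2^-1).
        nra.
      have q2 : h * t - h * (F + 2^-1) <= h / 2.
        nra.
      nra.
    have : n%:R * (h / 2) ^+ 2 < s ^+ 2.
      rewrite /h.
      have -> : n%:R * (s / n%:R / 2) ^+ 2 = s ^+ 2 / (4 * n%:R).
        field; by rewrite gt_eqF.
      rewrite ltr_pdivrMr ?mulr_gt0 // ltr_pMr ?exprn_gt0 //.
      have : (1 : R) <= n%:R by rewrite ler1n.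
      lra.
    move=> hs; rewrite -[X in _ < X](gtr0_norm s0) -sqrtr_sqr ltr_sqrt ?exprn_gt0 //.
    exact: le_lt_trans sb hs.
  have gi : eball (c i) s g by apply: gin.
  have gj : eball (c j) s g by apply: gin => l; rewrite eqk.
  have := disj i j iu ju ij.
  by move/seteqP => [/(_ g (conj gi gj))].
rewrite -(size_map f).
have : uniq (map f u) by rewrite map_inj_in_uniq.
move/card_uniqP => <-.
by rewrite (leq_trans (max_card _)) // card_ffun !card_ord.
Qed.


Lemma greedy (d : nat -> nat -> R) (tau : R) (s : seq nat) :
  (forall i j, d i j = d j i) -> (forall i, d i i < tau) -> uniq s ->
  exists T : seq nat, [/\ uniq T, {subset T <= s},
    (forall i j, i \in T -> j \in T -> i <> j -> tau <= d i j) &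
    (forall i, i \in s -> has (fun j => d i j < tau) T)].
Proof.
move=> dsym dii; elim: s => [|a s IH] /=.
  by move=> _; exists [::]; split.
move=> /andP[ans us]; have [T [uT sT farT covT]] := IH us.
have [hasa|nhasa] := boolP (has (fun j => d a j < tau) T).
  exists T; split => //.
  - by move=> x xT; rewrite inE (sT x xT) orbT.
  - by move=> i; rewrite inE => /orP[/eqP ->|/covT].
exists (a :: T); split => //.
- rewrite /= uT andbT; apply/negP => /sT; by rewrite (negbTE ans).
- by move=> x; rewrite !inE => /orP[->|/sT ->] //; rewrite orbT.
- have fa : forall j, j \in T -> tau <= d a j.
    move=> j jT; rewrite leNgt; apply/negP => dj; move/negP: nhasa; apply.
    by apply/hasP; exists j.
  move=> i j; rewrite !inE => /orP[/eqP ->|iT] /orP[/eqP ->|jT] ij //.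
  + exact: fa.
  + by rewrite dsym; apply: fa.
  + exact: farT.
- move=> i; rewrite inE => /orP[/eqP ->|/covT hi] /=; first by rewrite dii.
  by rewrite hi orbT.
Qed.

Lemma cover_count (P : nat -> nat -> bool) (s T : seq nat) (K : nat) :
  (forall i, i \in s -> has (P i) T) ->
  (forall j, j \in T -> (count (fun i => P i j) s <= K)%N) ->
  (size s <= size T * K)%N.
Proof.
move=> cov cnt.
have e1 : (size s <= \sum_(i <- s) count (P i) T)%N.
  rewrite -sum1_size big_seq [X in (_ <= X)%N]big_seq; apply: leq_sum => i iis.
  by rewrite -has_count; apply: cov.
apply: (leq_trans e1).
have cE : forall (Q : nat -> bool) (l : seq nat), count Q l = \sum_(x <- l) (Q x : nat).
  move=> Q l; elim: l => [|x l IHl]; first by rewrite big_nil.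
  by rewrite big_cons /= IHl.
have e2 : \sum_(i <- s) count (P i) T = \sum_(j <- T) count (fun i => P i j) s.
  under eq_bigr => i _ do rewrite cE.
  rewrite exchange_big /=; apply: eq_bigr => j _; by rewrite cE.
rewrite e2 -[X in (_ <= X * _)%N]sum1_size big_distrl /= big_seq [X in (_ <= X)%N]big_seq.
by apply: leq_sum => j jT; rewrite mul1n; apply: cnt.
Qed.

End Lat.

Section Meas.
Variables (R : realType) (n : nat).
Local Notation pt := 'rV[R]_n.

Lemma Peps_mono (b : bool) (al e1 e2 : R) (E : set pt) : e1 <= e2 ->
  (Peps b al e1 E <= Peps b al e2 E)%E.
Proof.
move=> e12; apply: le_ereal_sup => x [I [c [r [[h1 [h2 [h3 h4]]] ->]]]].
exists I, c, r; split => //; split => //; split => //.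
by move=> i Ii; apply: le_trans (h2 i Ii) e12.
Qed.

Lemma Peps_ge0 (b : bool) (al e : R) (E : set pt) : (0 <= Peps b al e E)%E.
Proof.
apply: ereal_sup_ubound; exists set0, (fun _ => 0), (fun _ => 1).
by split; [do !split | rewrite esum_set0].
Qed.

Lemma P0E (b : bool) (al : R) (E : set pt) :
  P0 b al E = ereal_inf [set Peps b al e E | e in [set` Interval (BRight (0:R)) (BInfty R false)]].
Proof.
apply: cvg_lim => //.
apply: nondecreasing_at_right_cvge => //.
move=> x y _ _ xy; exact: Peps_mono.
Qed.

Lemma P0_le (b : bool) (al e : R) (E : set pt) : 0 < e -> (P0 b al E <= Peps b al e E)%E.
Proof.
move=> e0; rewrite P0E; apply: ereal_inf_lbound; exists e => //=.
by rewrite in_itv /= e0.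
Qed.

Lemma P0_ge0 (b : bool) (al : R) (E : set pt) : (0 <= P0 b al E)%E.
Proof.
rewrite P0E; apply/ereal_infP => _ [e _ <-]; exact: Peps_ge0.
Qed.

Lemma P0_lt (b : bool) (al : R) (E : set pt) (x : \bar R) : (P0 b al E < x)%E ->
  exists2 e, 0 < e & (Peps b al e E < x)%E.
Proof.
rewrite P0E => /ereal_inf_lt [y [e /=]]; rewrite in_itv /= andbT => e0 <- lt.
by exists e.
Qed.

Lemma Peps_tf (al e : R) (E : set pt) : (Peps true al e E <= Peps false al e E)%E.
Proof.
apply: le_ereal_sup => x [I [c [r [[h1 [h2 [h3 h4]]] ->]]]].
exists I, c, r; split => //; do 3!split => //.
move=> i Ii /=; exists (c i); split; last exact: (h4 i Ii).
by rewrite /eball /= edist_xx; apply: h1.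
Qed.

Lemma P0_tf (al : R) (E : set pt) : (P0 true al E <= P0 false al E)%E.
Proof.
rewrite [P0 false _ _]P0E; apply/ereal_infP => y [e /=]; rewrite in_itv /= andbT => e0 <-.
exact: le_trans (P0_le _ _ _ e0) (Peps_tf _ _ _).
Qed.

Lemma Pmeas_ge0 (b : bool) (al : R) (E : set pt) : (0 <= Pmeas b al E)%E.
Proof.
apply/ereal_infP => _ [F [_ ->]]; apply: nneseries_ge0 => j _ _; exact: P0_ge0.
Qed.

Lemma Pmeas_tf (al : R) (E : set pt) : (Pmeas true al E <= Pmeas false al E)%E.
Proof.
apply/ereal_infP => _ [F [cov ->]]; apply: ereal_inf_le.
exists (\sum_(0 <= j <oo) P0 true al (F j))%E; first by exists F.
apply: lee_nneseries => j *; [exact: P0_ge0 | exact: P0_tf].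
Qed.

End Meas.

Section Calc.
Variable R : realType.

Lemma bucket_exists (e r : R) : 0 < e -> 0 < r -> r <= e / 2 ->
  exists k, e * (2^-1) ^+ k / 4 < r /\ r <= e * (2^-1) ^+ k / 2.
Proof.
move=> e0 r0 re.
have ex : exists m, e * (2^-1) ^+ m / 2 < r.
  exists (Num.trunc (e / r)).
  set m := Num.trunc (e / r).
  have h1 : e / r < m.+1%:R := truncnS_gt _.
  have h2 : e < r * m.+1%:R by rewrite -ltr_pdivrMl // mulrC.
  have h3 : (m.+1 <= 2 ^ m)%N by exact: ltn_expl.
  have h4 : (m.+1%:R : R) <= 2 ^+ m by rewrite -natrX ler_nat.
  have h5 : (2^-1 : R) ^+ m * 2 ^+ m = 1 by rewrite -exprMn mulVf // expr1n.
  have h6 : 0 < (2^-1 : R) ^+ m by apply: exprn_gt0.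
  set h := (2^-1 : R) ^+ m in h5 h6 *.
  set M := (m.+1%:R : R) in h2 h4 *.
  set P := (2 ^+ m : R) in h4 h5.
  have h7 : h * M <= 1 by rewrite -h5; apply: ler_wpM2l => //; exact: ltW.
  nra.
pose P m := e * (2^-1) ^+ m / 2 < r.
have exP : exists m, P m by [].
case: (ex_minnP exP) => m Pm minm.
have m0 : m != 0%N.
  apply/eqP => m0; move: Pm; rewrite /P m0 expr0 mulr1; lra.
exists m.-1; split.
  move: Pm; rewrite /P -(prednK (n:=m)) ?lt0n // exprS.
  have : 0 <= (2^-1 : R) ^+ m.-1 by apply: exprn_ge0.
  nra.
rewrite leNgt; apply/negP => h.
have := minm _ h; move: m0; lia.
Qed.

Lemma geom_le (q : R) (N : nat) : 0 <= q < 1 -> \sum_(k < N) q ^+ k <= (1 - q)^-1.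
Proof.
move=> /andP[q0 q1].
have e : \sum_(k < N) q ^+ k * (1 - q) = 1 - q ^+ N.
  elim: N => [|N IH]; first by rewrite big_ord0 expr0 subrr.
  by rewrite big_ord_recr /= IH exprS; ring.
rewrite -mulr_suml in e.
rewrite -[X in _ <= X]mul1r ler_pdivlMr ?subr_gt0 // e.
by rewrite gerBl; apply: exprn_ge0.
Qed.

Lemma sum_count (b : pred nat) (c : R) (s : seq nat) :
  \sum_(i <- s) (b i)%:R * c = (count b s)%:R * c.
Proof.
elim: s => [|a s IH]; first by rewrite big_nil mul0r.
by rewrite big_cons IH /= natrD mulrDl.
Qed.

Lemma wpow (e g : R) (k : nat) : 0 <= e ->
  (e * (2^-1) ^+ k) `^ g = e `^ g * ((2^-1) `^ g) ^+ k.
Proof.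
move=> e0.
have h0 : (0 : R) <= 2^-1 by rewrite invr_ge0.
rewrite powRM //.
congr (_ * _).
rewrite -(powR_mulrn k h0) -(powR_mulrn k (powR_ge0 _ _)).
by rewrite powRAC.
Qed.

End Calc.

Section Key.
Variables (R : realType) (n : nat) (F : set 'rV[R]_n) (al e0 : R).
Local Notation pt := 'rV[R]_n.
Hypotheses (n0 : (0 < n)%N) (al0 : 0 <= al) (e00 : 0 < e0)
  (hP : (Peps true al e0 F < 1)%E).

Lemma countA (rho : R) (T : seq nat) (x : nat -> pt) : 0 < rho -> 2 * rho <= e0 ->
  uniq T -> (forall j, j \in T -> F (x j)) ->
  (forall i j, i \in T -> j \in T -> i <> j -> 2 * rho <= edist (x i) (x j)) ->
  (size T)%:R * (2 * rho) `^ al <= 1.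
Proof.
move=> r0 re uT FT sep.
have pk : is_packing true e0 F [set` T] x (fun _ => rho).
  split; first by [].
  split; first by move=> i _; rewrite diam_eq.
  split; last by move=> i /= iT; apply: FT.
  move=> i j /= iT jT ij; apply/seteqP; split => // y [yi yj].
  move: yi yj; rewrite /eball /= => yi yj.
  have := sep i j iT jT ij; have := edist_triangle (x i) y (x j).
  rewrite (edist_sym y (x j)); lra.
have hle : (\esum_(i in [set` T]) ((diam (eball (x i) rho)) `^ al)%:E <= Peps true al e0 F)%E.
  by apply: ereal_sup_ubound; exists [set` T], x, (fun _ => rho).
have := le_lt_trans hle hP.
rewrite esum_fset; last 2 first.
- exact: finite_seq.
- by move=> i _; rewrite lee_fin powR_ge0.
rewrite -fsbig_seq // sumEFin lte_fin.
under eq_bigr => i _ do rewrite diam_eq //.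
rewrite big_const_seq count_predT iter_addr_0 => h.
by rewrite mulr_natl ltW.
Qed.


Lemma countB (rho : R) (s : seq nat) (c x : nat -> pt) (r : nat -> R) :
  0 < rho -> 2 * rho <= e0 -> uniq s ->
  (forall i j, i \in s -> j \in s -> i <> j -> eball (c i) (r i) `&` eball (c j) (r j) = set0) ->
  (forall i, i \in s -> [/\ rho / 2 < r i, r i <= rho, F (x i) & edist (c i) (x i) < r i]) ->
  (size s)%:R * (2 * rho) `^ al <= ((12 * n).+1 ^ n)%:R.
Proof.
move=> r0 re us disj hs.
have dii : forall i, edist (x i) (x i) < 2 * rho by move=> i; rewrite edist_xx; lra.
have [T [uT sT farT covT]] := @greedy R (fun i j => edist (x i) (x j)) (2 * rho) s
   (fun i j => edist_sym (x i) (x j)) dii us.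
have cnt : (size s <= size T * ((12 * n).+1 ^ n))%N.
  apply: (cover_count (P := fun i j => edist (x i) (x j) < 2 * rho)) => //.
  move=> j jT; rewrite -size_filter.
  apply: (@lattice_count R n _ c (rho / 2) (x j)) => //.
  - by apply: divr_gt0.
  - exact: filter_uniq.
  - move=> i i'; rewrite !mem_filter => /andP[_ ins] /andP[_ ins'] ii'.
    apply/seteqP; split => // y [yi yi'].
    have := disj i i' ins ins' ii'; move/seteqP => [/(_ y) h _]; apply: h.
    have [hi1 _ _ _] := hs i ins; have [hi1' _ _ _] := hs i' ins'.
    move: yi yi'; rewrite /eball /= => yi yi'; split; rewrite /eball /=; lra.
  - move=> i; rewrite mem_filter => /andP[hij ins].
    have [_ hi2 _ hi4] := hs i ins.
    have := edist_triangle (c i) (x i) (x j); lra.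
have A := countA (T := T) (x := x) r0 re uT (fun j jT => let: And4 _ _ h _ := hs j (sT j jT) in h) farT.
have p0 : 0 <= (2 * rho) `^ al by apply: powR_ge0.
apply: (le_trans (y := (size T * (12 * n).+1 ^ n)%:R * (2 * rho) `^ al)).
  by apply: ler_wpM2r => //; rewrite ler_nat.
rewrite natrM.
have K0 : (0:R) <= ((12 * n).+1 ^ n)%:R by [].
set K := ((12 * n).+1 ^ n)%:R in K0 *.
set p := (2 * rho) `^ al in p0 A *.
set t := (size T)%:R in A *.
nra.
Qed.


Lemma sumC (be e : R) (s : seq nat) (c x : nat -> pt) (r : nat -> R) :
  al < be -> 0 < e -> e <= e0 -> uniq s ->
  (forall i j, i \in s -> j \in s -> i <> j -> eball (c i) (r i) `&` eball (c j) (r j) = set0) ->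
  (forall i, i \in s -> [/\ 0 < r i, 2 * r i <= e, F (x i) & edist (c i) (x i) < r i]) ->
  \sum_(i <- s) (diam (eball (c i) (r i))) `^ be <=
    ((12 * n).+1 ^ n)%:R * e `^ (be - al) / (1 - (2^-1) `^ (be - al)).
Proof.
move=> ab e0' ee us disj hs.
set g := be - al.
have g0 : 0 < g by rewrite /g subr_gt0.
have be0 : 0 <= be by apply: le_trans al0 (ltW ab).
set q := (2^-1 : R) `^ g.
have q0 : 0 <= q by apply: powR_ge0.
have q1 : q < 1.
  have := @gt0_ltr_powR R g g0 (2^-1) 1; rewrite powR1 => h; apply: h.
  - by rewrite nnegrE invr_ge0.
  - by rewrite nnegrE.
  - by rewrite invf_lt1 // ltr1n.
set K := ((12 * n).+1 ^ n)%:R.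
have K0 : (0 : R) <= K by [].
pose w k := e * (2^-1 : R) ^+ k.
have w0 : forall k, 0 < w k by move=> k; apply: mulr_gt0 => //; apply: exprn_gt0; rewrite invr_gt0.
have we : forall k, w k <= e.
  move=> k; rewrite /w -[X in _ <= X]mulr1; apply: ler_wpM2l; first exact: ltW.
  by apply: exprn_ile1; rewrite ?invr_ge0 // invf_le1 // ler1n.
pose P i k := (w k / 4 < r i) && (r i <= w k / 2).
have exN : forall t : seq nat, {subset t <= s} -> exists N, forall i, i \in t -> exists k, (k < N)%N /\ P i k.
  elim => [|a t IH] sub; first by exists 0%N.
  have [N HN] := IH (fun y yt => sub y (@mem_behead _ (a :: t) y yt)).
  have [ra _ _ _] := hs a (sub a (mem_head _ _)).
  have [_ ra2 _ _] := hs a (sub a (mem_head _ _)).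
  have [k [k1 k2]] := bucket_exists e0' ra (ltac:(lra) : r a <= e / 2).
  exists (maxn N k.+1) => i; rewrite inE => /orP[/eqP ->|it].
    by exists k; split; [rewrite leq_max ltnSn orbT | rewrite /P k1 k2].
  have [k' [k'N Pk']] := HN i it.
  by exists k'; split => //; rewrite leq_max k'N.
have [N HN] := exN s (fun y h => h).
have step1 : \sum_(i <- s) (diam (eball (c i) (r i))) `^ be <=
    \sum_(i <- s) \sum_(k < N) (P i k)%:R * (w k) `^ be.
  rewrite big_seq [X in _ <= X]big_seq; apply: ler_sum => i ins.
  have [k [kN Pik]] := HN i ins.
  rewrite (bigD1 (Ordinal kN)) //= Pik mul1r.
  apply: ler_wpDr; first by apply: sumr_ge0 => j _; apply: mulr_ge0 => //; apply: powR_ge0.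
  have [ri0 _ _ _] := hs i ins.
  rewrite diam_eq //; apply: ge0_ler_powR => //; rewrite ?nnegrE.
  - by apply: mulr_ge0 => //; exact: ltW.
  - exact: ltW.
  - by move/andP: Pik => [_ h]; lra.
apply: (le_trans step1).
rewrite exchange_big /=.
under eq_bigr => k _ do rewrite sum_count.
have step3 : forall k : 'I_N, (count (P^~ k) s)%:R * (w k) `^ be <= K * (w k) `^ g.
  move=> k.
  have -> : be = al + g by rewrite /g; ring.
  rewrite powRD; last by rewrite (gt_eqF (w0 k)) implybT.
  rewrite mulrA; apply: ler_wpM2r; first exact: powR_ge0.
  rewrite -size_filter.
  have := @countB (w k / 2) [seq i <- s | P i k] c x r.
  rewrite (_ : 2 * (w k / 2) = w k); last by field.
  apply.
  - by apply: divr_gt0.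
  - exact: le_trans (we k) ee.
  - exact: filter_uniq.
  - move=> i j; rewrite !mem_filter => /andP[_ ins] /andP[_ jns]; exact: disj.
  - move=> i; rewrite mem_filter => /andP[Pik ins].
    have [_ _ h3 h4] := hs i ins.
    move/andP: Pik => [p1 p2]; split => //.
    by rewrite (_ : w k / 2 / 2 = w k / 4) //; field.
apply: (le_trans (ler_sum _ (fun k _ => step3 k))).
rewrite -mulr_sumr -mulrA; apply: ler_wpM2l => //.
rewrite /w.
have e0w : 0 <= e by exact: ltW.
under eq_bigr => k _ do rewrite (wpow _ _ e0w).
rewrite -mulr_sumr; apply: ler_wpM2l; first exact: powR_ge0.
by apply: geom_le; rewrite q0 q1.
Qed.


Lemma Peps_bound (be e : R) : al < be -> 0 < e -> e <= e0 ->
  (Peps false be e F <=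
    (((12 * n).+1 ^ n)%:R * e `^ (be - al) / (1 - (2^-1) `^ (be - al)))%:E)%E.
Proof.
move=> ab e0' ee.
apply/ereal_supP => _ [I [c [r [[h1 [h2 [h3 h4]]] ->]]]].
have hx : forall i, exists y, I i -> eball (c i) (r i) y /\ F y.
  move=> i; case: (pselect (I i)) => Ii.
    by have [y [yb yF]] := h4 i Ii; exists y.
  by exists (c i).
have [x hx'] := choice hx.
rewrite /esum; apply/ereal_supP => _ [A [finA AI] <-].
rewrite fsbig_finite // sumEFin lee_fin.
have sA : forall i, i \in finmap.enum_fset (fset_set A) -> I i.
  move=> i; rewrite in_fset_set // => /set_mem; exact: AI.
apply: (sumC (x := x)) => //.
- exact: finmap.fset_uniq.
- move=> i j iA jA; apply: h3; exact: sA.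
- move=> i iA; have Ii := sA i iA.
  have [xb xF] := hx' i Ii.
  have r0 := h1 i Ii.
  have := h2 i Ii; rewrite diam_eq // => d.
Qed.

End Key.

Lemma P0_key_pos (R : realType) (n : nat) (al be : R) (F : set 'rV[R]_n) :
  (0 < n)%N -> 0 <= al -> al < be -> (P0 true al F < 1)%E -> P0 false be F = 0%E.
Proof.
move=> n0 al0 ab h.
have [e0 e00 hP] := P0_lt h.
apply/eqP; rewrite eq_le; apply/andP; split; last exact: P0_ge0.
apply/lee_addgt0Pr => d d0; rewrite add0e.
set g := be - al.
have g0 : 0 < g by rewrite /g subr_gt0.
set q := (2^-1 : R) `^ g.
have q1 : q < 1.
  have := @gt0_ltr_powR R g g0 (2^-1) 1; rewrite powR1 => hh; apply: hh.
  - by rewrite nnegrE invr_ge0.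
  - by rewrite nnegrE.
  - by rewrite invf_lt1 // ltr1n.
pose K : R := ((12 * n).+1 ^ n)%:R.
have K0 : (0 : R) < K by rewrite ltr0n expn_gt0.
set C := K / (1 - q).
have C0 : 0 < C by rewrite /C divr_gt0 // subr_gt0.
set t := (d / C) `^ g^-1.
have t0 : 0 < t by apply: powR_gt0; apply: divr_gt0.
set e := Num.min e0 t.
have e0' : 0 < e by rewrite lt_min e00 t0.
have ee : e <= e0 by rewrite ge_min lexx.
apply: (le_trans (@P0_le R n false be e F e0')).
apply: (le_trans (Peps_bound n0 al0 hP ab e0' ee)).
rewrite lee_fin.
have et : e `^ g <= d / C.
  have -> : d / C = t `^ g.
    rewrite /t -powRrM mulVf ?gt_eqF // powRr1 //.
    exact: divr_ge0 (ltW d0) (ltW C0).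
  apply: (ge0_ler_powR (ltW g0)); rewrite ?nnegrE; [exact: ltW|exact: ltW|].
  by rewrite ge_min lexx orbT.
rewrite -/g -/q -/K.
have -> : K * e `^ g / (1 - q) = C * e `^ g by rewrite /C mulrAC.
apply: le_trans (ler_wpM2l (ltW C0) et) _.
by rewrite mulrC divfK ?gt_eqF.
Qed.

Lemma P0_key_zero (R : realType) (n : nat) (be : R) (F : set 'rV[R]_n) :
  n = 0%N -> 0 < be -> P0 false be F = 0%E.
Proof.
move=> n0 be0.
apply/eqP; rewrite eq_le; apply/andP; split; last exact: P0_ge0.
apply: (le_trans (@P0_le R n false be 1 F ltr01)).
apply/ereal_supP => _ [I [c [r [[h1 [h2 [h3 h4]]] ->]]]].
rewrite esum1; first by [].
move=> i Ii.
rewrite diam_n0 //; last exact: h1.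
by rewrite powR0 // gt_eqF.
Qed.

Lemma P0_key (R : realType) (n : nat) (al be : R) (F : set 'rV[R]_n) :
  0 <= al -> al < be -> (P0 true al F < 1)%E -> P0 false be F = 0%E.
Proof.
move=> al0 ab h.
case: (posnP n) => [n0|n0].
  by apply: P0_key_zero => //; exact: le_lt_trans al0 ab.
exact: (P0_key_pos n0 al0 ab h).
Qed.


Lemma Pmeas_key (R : realType) (n : nat) (al be : R) (E : set 'rV[R]_n) :
  0 <= al -> al < be -> Pmeas true al E = 0%E -> Pmeas false be E = 0%E.
Proof.
move=> a0 ab P0a.
have : (Pmeas true al E < 1)%E by rewrite P0a lte01.
case/ereal_inf_lt => _ [F [cov ->]] lt1.
apply/eqP; rewrite eq_le; apply/andP; split; last exact: Pmeas_ge0.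
apply: ereal_inf_le; exists 0%E => //; exists F; split => //.
rewrite eseries0 // => j _ _.
apply: (P0_key a0 ab).
apply: le_lt_trans lt1.
apply: le_trans (@nneseries_lim_ge _ _ xpredT 0 j.+1 _); last first.
  by move=> i _ _; apply: P0_ge0.
rewrite big_nat_recr //= leeDr //.
by apply: sume_ge0 => i _; apply: P0_ge0.
Qed.

Theorem corollary1 (R : realType) (n : nat) (E : set 'rV[R]_n) :
  dimP_unc E = dimP E.
Proof.
apply/eqP; rewrite eq_le; apply/andP; split.
- apply/ereal_infP => _ [a [a0 Pa] <-].
  apply/lee_addgt0Pr => e e0.
  rewrite -EFinD.
  apply: ereal_inf_lbound.
  exists (a + e); last by [].
  split; first by rewrite addr_ge0 // ltW.
  apply: (Pmeas_key (be := a + e) a0 _ Pa).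
  by rewrite ltrDl.
- apply/ereal_infP => _ [a [a0 Pa] <-].
  apply: ereal_inf_lbound.
  exists a; last by [].
  split => //.
  apply/eqP; rewrite eq_le; apply/andP; split; last exact: Pmeas_ge0.
  rewrite -Pa; exact: Pmeas_tf.
Qed.
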